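(* Let $n\ge2$ and let $\equiv$ be a lattice congruence of the weak order on $S_n$. The following are equivalent: (i) $\mathrm{id}_n\equiv c_{n-1}(\mathrm{id}_{n-1})$; (ii) there is $\pi\in S_{n-1}$ such that $c_i(\pi)\equiv c_{i+1}(\pi)$ for all $1\le i<n$; (iii) for all $\pi\in S_{n-1}$ and all $1\le i<n$, $c_i(\pi)\equiv c_{i+1}(\pi)$.
   Context: $S_n$ is the set of permutations of $[n]$ in one-line notation, ordered by the weak order (inclusion of inversion sets $\mathrm{inv}(\pi)=\{(a_i,a_j):i<j,\ a_i>a_j\}$), which is a lattice. A lattice congruence is an equivalence relation on $S_n$ compatible with joins and meets: $\pi\equiv\pi'$ and $\rho\equiv\rho'$ imply $\pi\vee\rho\equiv\pi'\vee\rho'$ and $\pi\wedge\rho\equiv\pi'\wedge\rho'$. $\mathrm{id}_n=12\cdots n$. For $\pi\in S_{n-1}$ and $1\le i\le n$, $c_i(\pi)\in S_n$ is obtained by inserting the value $n$ at position $i$ of $\pi$. *)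

(* Defs.v *)
(* Permutations of [n] are represented in one-line notation
   as sequences of naturals that are permutations of 1..n. *)
From mathcomp Require Import all_boot.
Set Implicit Arguments. Unset Strict Implicit. Unset Printing Implicit Defensive.

Definition is_perm (n : nat) (s : seq nat) : Prop := perm_eq s (iota 1 n).

Definition idn (n : nat) : seq nat := iota 1 n.

Definition inv (s : seq nat) (p : nat * nat) : Prop :=
  exists i j, i < j /\ j < size s /\ nth 0 s i = p.1 /\ nth 0 s j = p.2 /\ p.1 > p.2.

Definition weak_le (s t : seq nat) : Prop := forall p, inv s p -> inv t p.

Definition is_join (n : nat) (x y z : seq nat) : Prop :=
  is_perm n z /\ weak_le x z /\ weak_le y z /\
  forall w, is_perm n w -> weak_le x w -> weak_le y w -> weak_le z w.

Definition is_meet (n : nat) (x y z : seq nat) : Prop :=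
  is_perm n z /\ weak_le z x /\ weak_le z y /\
  forall w, is_perm n w -> weak_le w x -> weak_le w y -> weak_le w z.

(* a lattice congruence of the weak order on S_n (only its restriction to S_n matters) *)
Definition lattice_congruence (n : nat) (R : seq nat -> seq nat -> Prop) : Prop :=
  (forall x, is_perm n x -> R x x) /\
  (forall x y, is_perm n x -> is_perm n y -> R x y -> R y x) /\
  (forall x y z, is_perm n x -> is_perm n y -> is_perm n z -> R x y -> R y z -> R x z) /\
  (forall x x' y y' z z', is_perm n x -> is_perm n x' -> is_perm n y -> is_perm n y' ->
     R x x' -> R y y' -> is_join n x y z -> is_join n x' y' z' -> R z z') /\
  (forall x x' y y' z z', is_perm n x -> is_perm n x' -> is_perm n y -> is_perm n y' ->
     R x x' -> R y y' -> is_meet n x y z -> is_meet n x' y' z' -> R z z').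

(* c_i(pi) in S_n for pi in S_{n-1}: insert the value n at (1-indexed) position i *)
Definition cins (n i : nat) (s : seq nat) : seq nat :=
  take i.-1 s ++ n :: drop i.-1 s.

(* Main.v *)
Require Import Defs.
From mathcomp Require Import all_boot.
From mathcomp Require Import zify.
Require Import Defs.
Set Implicit Arguments. Unset Strict Implicit. Unset Printing Implicit Defensive.

Definition bef (s : seq nat) (x y : nat) : bool :=
  [&& x \in s, y \in s & index x s < index y s].

Lemma inv_bef s x y : uniq s -> inv s (x, y) <-> bef s x y /\ y < x.
Proof.
move=> us; split.
- case=> i [j [lij [ljs [/= hx [/= hy hlt]]]]].
  have lis : i < size s by apply: ltn_trans ljs.
  subst x y; split => //.
  by rewrite /bef !mem_nth // !index_uniq.
- case=> /and3P [xs ys lt] hlt.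
  exists (index x s), (index y s); split; first done.
  split; first by rewrite index_mem.
  by rewrite /= !nth_index.
Qed.

Lemma bef_cat s1 s2 x y : bef (s1 ++ s2) x y =
  [|| bef s1 x y, [&& x \in s1, y \notin s1 & y \in s2] |
      [&& x \notin s1, y \notin s1 & bef s2 x y]].
Proof.
rewrite /bef !mem_cat !index_cat.
have hx := index_mem x s1; have hy := index_mem y s1.
case xs: (x \in s1) hx; case ys: (y \in s1) hy => /= hy hx.
- by rewrite !orbF.
- rewrite orbF; case: (y \in s2) => //=; lia.
- case: (x \in s2) => //=; lia.
- rewrite ltn_add2l; done.
Qed.

Lemma bef_cons z s x y : bef (z :: s) x y =
  ((x == z) && (y \in s) && (y != z)) || [&& x != z, y != z & bef s x y].
Proof.
have -> : z :: s = [:: z] ++ s by [].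
rewrite bef_cat /bef !inE /=.
case: (eqVneq x z) => [->|hxz]; case: (eqVneq y z) => [->|hyz] /=;
  rewrite ?eqxx ?andbF ?andbT //=.
Qed.

Lemma bef1 z x y : bef [:: z] x y = false.
Proof. by rewrite bef_cons /bef /= andbF !andbF. Qed.

Lemma bef_trans s a b c : bef s a b -> bef s b c -> bef s a c.
Proof.
case/and3P=> ha hb h1 /and3P [_ hc h2]; apply/and3P; split=> //.
exact: ltn_trans h2.
Qed.

Lemma bef_filter (p : pred nat) s x y : p x -> p y -> bef s x y -> bef (filter p s) x y.
Proof.
move=> px py; elim: s => [|z s IH] //=.
rewrite bef_cons; case pz: (p z).
- rewrite bef_cons mem_filter py.
  case/orP=> [/andP [/andP [-> ->] ->] //| /and3P [h1 h2 h3]].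
  by rewrite h1 h2 IH // orbT.
- case/orP=> [/andP [/andP [/eqP hx _] _] | /and3P [_ _ h3]].
  + by subst; rewrite px in pz.
  + exact: IH.
Qed.

Lemma bef_iota a k x y : bef (iota a k) x y -> x < y.
Proof.
case/and3P=> hx hy h.
by apply: (sorted_ltn_index ltn_trans (iota_ltn_sorted a k)) h.
Qed.

Lemma bef_mem1 s x y : bef s x y -> x \in s.
Proof. by case/and3P. Qed.
Lemma bef_mem2 s x y : bef s x y -> y \in s.
Proof. by case/and3P. Qed.

Lemma isp_uniq m s : is_perm m s -> uniq s.
Proof. by move=> h; rewrite (perm_uniq h) iota_uniq. Qed.

Lemma isp_mem m s x : is_perm m s -> (x \in s) = (0 < x <= m).
Proof. by move=> h; rewrite (perm_mem h) mem_iota add1n ltnS. Qed.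

Lemma iotaS1 m : iota 1 m.+1 = iota 1 m ++ [:: m.+1].
Proof. by rewrite -[m.+1]addn1 iotaD add1n addn1. Qed.

Lemma isp_rcons m s : is_perm m s -> is_perm m.+1 (s ++ [:: m.+1]).
Proof. by move=> h; rewrite /is_perm iotaS1 perm_cat2r. Qed.

Lemma isp_cins m s i : is_perm m s -> is_perm m.+1 (cins m.+1 i s).
Proof.
move=> h; rewrite /is_perm /cins.
have := perm_catCA (take i.-1 s) [:: m.+1] (drop i.-1 s).
rewrite /= cat_take_drop => e.
rewrite (e (iota 1 m.+1)).
have -> : m.+1 :: s = [:: m.+1] ++ s by [].
rewrite perm_catC; exact: isp_rcons.
Qed.

Lemma isp_cons m s : is_perm m s -> is_perm m.+1 (m.+1 :: s).
Proof. by move=> h; have := isp_cins 1 h; rewrite /cins /= take0 drop0. Qed.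

Lemma isp_sig m s : 0 < m -> is_perm m s -> is_perm m (m :: filter (predC1 m) s).
Proof.
move=> m0 h; have hm : m \in s by rewrite (isp_mem _ h) m0 leqnn.
rewrite /is_perm -rem_filter; last exact: isp_uniq h.
apply: perm_trans _ h; rewrite perm_sym; exact: perm_to_rem.
Qed.

Lemma wle_intro s t : uniq s -> uniq t ->
  (forall x y, y < x -> bef s x y -> bef t x y) -> weak_le s t.
Proof.
move=> us ut h [x y]; rewrite inv_bef // inv_bef //; case=> hb hl; split=> //.
exact: h.
Qed.

Lemma wle_refl s : weak_le s s. Proof. by []. Qed.
Lemma wle_trans s t u : weak_le s t -> weak_le t u -> weak_le s u.
Proof. by move=> h1 h2 p /h1 /h2. Qed.

Lemma bef_bot s z x y : (forall v, v \in s -> v < z) -> y < x ->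
  bef (s ++ [:: z]) x y -> bef s x y.
Proof.
move=> hs hyx; rewrite bef_cat bef1 !andbF orbF.
case/orP=> // /and3P [hx _]; rewrite inE => /eqP hy.
have := hs _ hx; lia.
Qed.

Lemma isp_lt m s v : is_perm m s -> v \in s -> v < m.+1.
Proof. by move=> h; rewrite (isp_mem _ h); case/andP. Qed.

Lemma le_bot_c m s i : is_perm m s -> weak_le (s ++ [:: m.+1]) (cins m.+1 i s).
Proof.
move=> h; apply: wle_intro.
- exact: isp_uniq (isp_rcons h).
- exact: isp_uniq (isp_cins i h).
move=> x y hyx /(bef_bot (fun v hv => isp_lt h hv) hyx) hb.
have hx := isp_lt h (bef_mem1 hb); have hy := isp_lt h (bef_mem2 hb).
move: hb; rewrite -[in bef s _ _](cat_take_drop i.-1 s) /cins !bef_cat bef_cons.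
have -> : (x == m.+1) = false by apply/eqP; lia.
have -> : (y == m.+1) = false by apply/eqP; lia.
rewrite inE /=.
case/or3P=> [->|/and3P [-> -> ->]|/and3P [-> -> ->]] //; by rewrite ?orbT.
Qed.

Lemma le_c_top m s i : is_perm m s -> weak_le (cins m.+1 i s) (m.+1 :: s).
Proof.
move=> h; apply: wle_intro.
- exact: isp_uniq (isp_cins i h).
- exact: isp_uniq (isp_cons h).
move=> x y hyx hb.
have hx := isp_lt (isp_cins i h) (bef_mem1 hb).
have hy : (y == m.+1) = false by apply/eqP; lia.
have ys := bef_mem2 hb.
rewrite bef_cons hy /=.
case: (eqVneq x m.+1) => [_|hxz] /=.
- move: ys; rewrite /cins mem_cat inE hy /= -{3}(cat_take_drop i.-1 s) mem_cat.
  by rewrite andbT orbF.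
- move: hb; rewrite -[in bef s _ _](cat_take_drop i.-1 s) /cins !bef_cat bef_cons.
  rewrite (negbTE hxz) hy inE hy /=.
  case/or3P=> [->|/and3P [-> -> ->]|/and3P [-> -> ->]] //; by rewrite ?orbT.
Qed.

Lemma le_bot_top m s : is_perm m s -> weak_le (s ++ [:: m.+1]) (m.+1 :: s).
Proof. move=> h; exact (wle_trans (@le_bot_c m s 1 h) (@le_c_top m s 1 h)). Qed.

Definition sig (m : nat) (s : seq nat) := m :: filter (predC1 m) s.

Lemma bef_sig m s x y : is_perm m s -> y < x -> bef s x y -> bef (sig m s) x y.
Proof.
move=> h hyx hb; have hx := isp_lt h (bef_mem1 hb); have ys := bef_mem2 hb.
rewrite /sig bef_cons.
case: (eqVneq x m) => [->|hxm] /=.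
- rewrite mem_filter ys /=. apply/andP; split; apply/eqP; lia.
- have hym : y != m by apply/eqP; lia.
  rewrite hym /=; apply: bef_filter => //; by rewrite /= ?hym.
Qed.

Lemma le_top_sig m s : 0 < m -> is_perm m s -> weak_le (m.+1 :: s) (m.+1 :: sig m s).
Proof.
move=> m0 h; apply: wle_intro.
- exact: isp_uniq (isp_cons h).
- exact: isp_uniq (isp_cons (isp_sig m0 h)).
move=> x y hyx; rewrite [bef (m.+1 :: s) _ _]bef_cons [bef (m.+1 :: sig m s) _ _]bef_cons.
case/orP=> [/andP [/andP [-> ys] ->]|/and3P [-> -> hb]].
- rewrite /sig inE mem_filter ys /=. by case: (y == m).
- by rewrite (bef_sig h hyx hb) orbT.
Qed.

Definition w k := cins k.+2 k.+1 (iota 1 k.+1).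

Lemma w_eq k : w k = iota 1 k ++ [:: k.+2; k.+1].
Proof.
rewrite /w /cins (iotaS1 k) take_size_cat ?size_iota // drop_size_cat ?size_iota //.
Qed.

Lemma isp_w k : is_perm k.+2 (w k).
Proof. exact: isp_cins (perm_refl _). Qed.

Lemma inv_w k x y : inv (w k) (x, y) -> x = k.+2 /\ y = k.+1.
Proof.
rewrite inv_bef; last exact: isp_uniq (isp_w k).
rewrite w_eq bef_cat; case=> /or3P [/bef_iota h|/and3P [hx _ hy]|/and3P [_ _ h]] hyx.
- lia.
- move: hx hy; rewrite mem_iota !inE => hx /orP [] /eqP hy; lia.
- move: h; rewrite bef_cons bef1 !andbF orbF inE.
  by case/andP=> [/andP [/eqP -> /eqP ->] _].
Qed.

Lemma inv_w2 k : inv (w k) (k.+2, k.+1).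
Proof.
rewrite inv_bef; last exact: isp_uniq (isp_w k).
split=> //; rewrite w_eq bef_cat; apply/or3P; apply: Or33.
rewrite !mem_iota bef_cons !inE eqxx /=; apply/and3P; split; lia.
Qed.

Lemma inv_id n x y : inv (iota 1 n) (x, y) -> False.
Proof. rewrite inv_bef ?iota_uniq // => -[/bef_iota]; lia. Qed.

Lemma wle_id n s : weak_le (iota 1 n) s.
Proof. by move=> [x y] /inv_id. Qed.

Lemma join_le n a b : is_perm n b -> weak_le a b -> is_join n a b b.
Proof. by move=> h1 h2; split=> //; split=> //; split=> // w' _ _ h. Qed.
Lemma join_le' n a b : is_perm n a -> weak_le b a -> is_join n a b a.
Proof. by move=> h1 h2; split=> //; split=> //; split=> // w' _ h. Qed.
Lemma meet_le n a b : is_perm n a -> weak_le a b -> is_meet n a b a.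
Proof. by move=> h1 h2; split=> //; split=> //; split=> // w' _ h. Qed.
Lemma meet_le' n a b : is_perm n b -> weak_le b a -> is_meet n a b b.
Proof. by move=> h1 h2; split=> //; split=> //; split=> // w' _ _ h. Qed.

Lemma meet_main k s : is_perm k.+1 s ->
  is_meet k.+2 (sig k.+1 s ++ [:: k.+2]) (k.+2 :: s) (s ++ [:: k.+2]).
Proof.
move=> h; have hsig := isp_sig (ltn0Sn k) h.
split; first exact: isp_rcons.
split.
  apply: wle_intro; first exact: isp_uniq (isp_rcons h).
    exact: isp_uniq (isp_rcons hsig).
  move=> x y hyx /(bef_bot (fun v hv => isp_lt h hv) hyx) hb.
  by rewrite bef_cat (bef_sig h hyx hb).
split; first exact: le_bot_top.
move=> u hu h1 h2 [x y] hi.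
have hu1 := h1 _ hi; have hu2 := h2 _ hi.
have u1 := isp_uniq (isp_cons h).
have u2 := isp_uniq (isp_rcons hsig).
have u3 := isp_uniq (isp_rcons h).
move: hu1 hu2; rewrite !inv_bef //.
move=> -[hb1 hyx] [hb2 _]; split => //.
have hb := bef_bot (fun v hv => isp_lt hsig hv) hyx hb1.
have hx := isp_lt hsig (bef_mem1 hb).
have hxz : (x == k.+2) = false by apply/eqP; lia.
move: hb2; rewrite bef_cons hxz /= => /andP [_ hb3].
by rewrite bef_cat hb3.
Qed.

Lemma join_main k s : is_perm k.+1 s ->
  is_join k.+2 (sig k.+1 s ++ [:: k.+2]) (w k) (k.+2 :: sig k.+1 s).
Proof.
move=> h; have hsig := isp_sig (ltn0Sn k) h.
have ut := isp_uniq (isp_cons hsig).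
have us := isp_uniq (isp_rcons hsig).
split; first exact: isp_cons hsig.
split; first exact: le_bot_top hsig.
split.
  move=> [x y] /inv_w [-> ->]; rewrite inv_bef //; split => //.
  rewrite bef_cons /sig !inE eqxx /=; apply/andP; split; apply/eqP; lia.
move=> u hu h1 h2 [x y].
have uu := isp_uniq hu.
rewrite inv_bef // => -[hb hyx].
move: hb; rewrite bef_cons => /orP [/andP [/andP [/eqP hx ys] _] | /and3P [hxz _ hb]].
- subst x; case: (eqVneq y k.+1) => [->|hyk]; first exact: h2 (inv_w2 k).
  move: ys; rewrite /sig inE (negbTE hyk) mem_filter /= hyk /= => ys.
  have hy := isp_lt h ys.
  have i1 := h2 _ (inv_w2 k).
  have i2 : inv u (k.+1, y).
    apply: h1; rewrite inv_bef //; split; last lia.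
    rewrite bef_cat /sig bef_cons eqxx /= mem_filter ys /=.
    by rewrite hyk.
  move: i1 i2; rewrite !inv_bef // => -[b1 _] [b2 _]; split; last lia.
  exact: bef_trans b1 b2.
- apply: h1; rewrite inv_bef //; split => //; by rewrite bef_cat hb.
Qed.

Lemma dirB k R : lattice_congruence k.+2 R -> R (iota 1 k.+2) (w k) ->
  forall s, is_perm k.+1 s -> forall i, R (cins k.+2 i s) (cins k.+2 i.+1 s).
Proof.
case=> refl [sym [tra [jn mt]]] hw s hs.
have hsig := isp_sig (ltn0Sn k) hs.
have r1 : R (sig k.+1 s ++ [:: k.+2]) (k.+2 :: sig k.+1 s).
  apply: (jn (sig k.+1 s ++ [:: k.+2]) (sig k.+1 s ++ [:: k.+2]) (iota 1 k.+2) (w k)).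
  - exact: isp_rcons.
  - exact: isp_rcons.
  - exact: perm_refl.
  - exact: isp_w.
  - apply: refl; exact: isp_rcons.
  - exact: hw.
  - apply: join_le'; [exact: isp_rcons | exact: wle_id].
  - exact: join_main.
have r2 : R (s ++ [:: k.+2]) (k.+2 :: s).
  apply: (mt _ _ (k.+2 :: s) (k.+2 :: s) _ _ _ _ _ _ r1 (refl _ (isp_cons hs)) (meet_main hs)).
  - exact: isp_rcons.
  - exact: isp_cons.
  - exact: isp_cons.
  - exact: isp_cons.
  - apply: meet_le'; [exact: isp_cons | exact: le_top_sig].
have c j : R (cins k.+2 j s) (k.+2 :: s).
  apply: (jn (s ++ [:: k.+2]) (k.+2 :: s) (cins k.+2 j s) (cins k.+2 j s)) r2 (refl _ (isp_cins j hs)) _ _.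
  - exact: isp_rcons.
  - exact: isp_cons.
  - exact: isp_cins.
  - exact: isp_cins.
  - apply: join_le; [exact: isp_cins | exact: le_bot_c].
  - apply: join_le'; [exact: isp_cons | exact: le_c_top].
move=> i.
apply: (tra _ _ _ _ _ _ (c i) (sym _ _ _ _ (c i.+1))); try exact: isp_cins; exact: isp_cons.
Qed.

Lemma dirA k R : lattice_congruence k.+2 R -> forall s, is_perm k.+1 s ->
  (forall i, 1 <= i -> i < k.+2 -> R (cins k.+2 i s) (cins k.+2 i.+1 s)) ->
  R (iota 1 k.+2) (w k).
Proof.
case=> refl [sym [tra [jn mt]]] s hs hE.
have chain : forall j, 1 <= j -> j <= k.+2 -> R (cins k.+2 1 s) (cins k.+2 j s).
  elim=> [//|j IH] _ hj.
  case: (eqVneq j 0) => [->|j0]; first by apply: refl; exact: isp_cins.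
  apply: (tra _ (cins k.+2 j s)); try exact: isp_cins.
    apply: IH; lia.
  apply: hE; lia.
have e1 : cins k.+2 1 s = k.+2 :: s by rewrite /cins /= take0 drop0.
have e2 : cins k.+2 k.+2 s = s ++ [:: k.+2].
  by rewrite /cins /= take_oversize ?drop_oversize // (perm_size hs) size_iota.
have r : R (k.+2 :: s) (s ++ [:: k.+2]) by rewrite -e1 -e2; apply: chain.
apply: (mt (s ++ [:: k.+2]) (k.+2 :: s) (w k) (w k) _ _ _ _ _ _ (sym _ _ _ _ r) (refl _ (isp_w k))).
- exact: isp_rcons.
- exact: isp_cons.
- exact: isp_w.
- exact: isp_w.
- exact: isp_cons.
- exact: isp_rcons.
- split; first exact: perm_refl.
  split; first exact: wle_id.
  split; first exact: wle_id.
  move=> u hu h1 h2 [x y] hi; exfalso.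
  have := h2 _ hi => /inv_w [hx hy]; subst x y.
  have := h1 _ hi; rewrite inv_bef; last exact: isp_uniq (isp_rcons hs).
  case=> hb hlt.
  have := isp_lt hs (bef_mem1 (bef_bot (fun v hv => isp_lt hs hv) hlt hb)); lia.
- apply: meet_le'; first exact: isp_w.
  move=> [x y] /inv_w [-> ->]; rewrite inv_bef; last exact: isp_uniq (isp_cons hs).
  split; last lia.
  rewrite bef_cons eqxx (isp_mem _ hs) /=; apply/andP; split; [lia | apply/eqP; lia].
Qed.

Theorem mainTheorem3 (n : nat) (R : seq nat -> seq nat -> Prop) :
  2 <= n -> lattice_congruence n R ->
  (R (idn n) (cins n n.-1 (idn n.-1)) <->
   exists pi, is_perm n.-1 pi /\
     forall i, 1 <= i -> i < n -> R (cins n i pi) (cins n i.+1 pi)) /\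
  ((exists pi, is_perm n.-1 pi /\
     forall i, 1 <= i -> i < n -> R (cins n i pi) (cins n i.+1 pi)) <->
   (forall pi, is_perm n.-1 pi ->
     forall i, 1 <= i -> i < n -> R (cins n i pi) (cins n i.+1 pi))).
Proof.
case: n => [|[|k]] // _ hR; rewrite /idn /=.
have hid : is_perm k.+1 (iota 1 k.+1) by exact: perm_refl.
split; split.
- move=> hw; exists (iota 1 k.+1); split => // i _ _.
  exact: (dirB hR hw hid).
- case=> s [hs hE]; exact: (dirA hR hs hE).
- case=> s [hs hE] s' hs' i _ _; exact: (dirB hR (dirA hR hs hE) hs').
- move=> h; exists (iota 1 k.+1); split => //; exact: h.
Qed.
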